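(* Let $c>0$ and let $(\vartheta_n)$ be a sequence with $0\le\vartheta_n\nearrow\vartheta_\infty$, $\vartheta_\infty\in(0,1)$. For each $n$ let $T_n>0$ and $u_n$ be a classical entire solution of $\partial_t u=\partial_{xx}u-c\partial_x u$ ($x>0$), $\partial_x u=1+\vartheta_n h(u)$ ($x=0$), with $u_n(\cdot,t)\in Y_c$, $u_n(\cdot,T_n)=u_n(\cdot,0)-2\pi$, $\partial_t u_n<0$, and $u_n(0,0)=0$. Then there exist $\lambda,\mu>0$ such that for all $n$, $$\frac{2\pi}{\mu}\le T_n\le\frac{2\pi}{\lambda}.$$
   Context: $h\in C^2(\mathbb{R},\mathbb{R})$ is $2\pi$-periodic with $\max h=1$, $\min h=h(\pi)=-1$. $Y_c$ is the space of $v$ on $[0,\infty)$ with $x\mapsto e^{-cx/2}v(x)$ bounded and uniformly continuous. *)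

(* Defs.v *)
From Stdlib Require Import Reals Lra.
From Coquelicot Require Import Coquelicot.
Open Scope R_scope.

Definition C2 (h : R -> R) : Prop :=
  exists h1 h2 : R -> R,
    (forall x, is_derive h x (h1 x)) /\
    (forall x, is_derive h1 x (h2 x)) /\
    (forall x, continuous h2 x).

Definition admissible_h (h : R -> R) : Prop :=
  C2 h /\
  (forall x, h (x + 2 * PI) = h x) /\
  (forall x, h x <= 1) /\ (exists x, h x = 1) /\
  (forall x, -1 <= h x) /\ h PI = -1.

Definition Yc (c : R) (v : R -> R) : Prop :=
  let w := fun x => exp (- c * x / 2) * v x in
  (exists M, forall x, 0 <= x -> Rabs (w x) <= M) /\
  (forall eps, 0 < eps -> exists delta, 0 < delta /\
     forall x y, 0 <= x -> 0 <= y -> Rabs (x - y) < delta ->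
       Rabs (w x - w y) < eps).

Definition cont_on (P : R -> Prop) (f : R -> R -> R) : Prop :=
  forall x t, P x -> forall eps, 0 < eps -> exists delta, 0 < delta /\
    forall y s, P y -> Rabs (y - x) < delta -> Rabs (s - t) < delta ->
      Rabs (f y s - f x t) < eps.

Definition classical_entire_solution (c theta : R) (h : R -> R)
    (u : R -> R -> R) : Prop :=
  exists ut ux uxx : R -> R -> R,
    cont_on (fun x => 0 <= x) u /\
    cont_on (fun x => 0 <= x) ux /\
    cont_on (fun x => 0 < x) ut /\
    cont_on (fun x => 0 < x) uxx /\
    (forall x t, 0 <= x -> is_derive (fun s => u x s) t (ut x t)) /\
    (forall x t, 0 < x -> is_derive (fun y => u y t) x (ux x t)) /\
    (forall x t, 0 < x -> is_derive (fun y => ux y t) x (uxx x t)) /\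
    (forall t, filterlim (fun y => (u y t - u 0 t) / y) (at_right 0)
                 (locally (ux 0 t))) /\
    (forall x t, 0 < x -> ut x t = uxx x t - c * ux x t) /\
    (forall t, ux 0 t = 1 + theta * h (u 0 t)).

(* Main.v *)
Require Import Defs.
From Stdlib Require Import Reals Lra.
From Coquelicot Require Import Coquelicot.
Open Scope R_scope.

Lemma ball_R (x e y : R) : ball x e y <-> Rabs (y - x) < e.
Proof. reflexivity. Qed.

Lemma cont_eps (g : R -> R) (x : R) :
  (forall eps, 0 < eps -> exists d, 0 < d /\ forall y, Rabs (y - x) < d -> Rabs (g y - g x) < eps) ->
  continuous g x.
Proof.
  intros H. apply filterlim_locally. intros eps.
  destruct (H eps (cond_pos eps)) as [d [Hd H1]].
  exists (mkposreal d Hd). intros y Hy. apply H1. exact Hy.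
Qed.

Lemma H2d (P : R -> Prop) (f : R -> R -> R) x t r :
  cont_on P f -> 0 < r -> (forall y, Rabs (y - x) < r -> P y) ->
  continuity_2d_pt f x t /\ continuity_2d_pt (fun s y => f y s) t x.
Proof.
  intros Hc Hr HP. assert (Px : P x) by (apply HP; rewrite Rminus_eq_0, Rabs_R0; lra).
  split; intros eps; destruct (Hc x t Px eps (cond_pos eps)) as [d [Hd H]];
  exists (mkposreal (Rmin d r) (Rmin_pos _ _ Hd Hr)); simpl; intros u v Hu Hv.
  - apply H; try apply HP; eapply Rlt_le_trans; eauto; apply Rmin_l || apply Rmin_r.
  - apply H; try apply HP; eapply Rlt_le_trans; eauto; apply Rmin_l || apply Rmin_r.
Qed.

Lemma c2d_1 f x t : continuity_2d_pt f x t -> continuous (fun y => f y t) x.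
Proof.
  intros H. apply cont_eps. intros eps He.
  destruct (H (mkposreal eps He)) as [d Hd]. exists d. split. apply cond_pos.
  intros y Hy. apply Hd. exact Hy. rewrite Rminus_eq_0, Rabs_R0. apply cond_pos.
Qed.

Lemma Ht (P : R -> Prop) f x t : cont_on P f -> P x -> continuous (fun s => f x s) t.
Proof.
  intros Hc Px. apply cont_eps. intros eps He.
  destruct (Hc x t Px eps He) as [d [Hd H]]. exists d. split. exact Hd.
  intros y Hy. apply H. exact Px. rewrite Rminus_eq_0, Rabs_R0; lra. exact Hy.
Qed.

Lemma locally_pos X : 0 < X -> locally X (fun y => 0 < y).
Proof.
  intros H. exists (mkposreal X H). intros y Hy. assert (Hy2 : Rabs (y - X) < X) by exact Hy. clear Hy.
  apply Rabs_def2 in Hy2. destruct Hy2. lra.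
Qed.

Lemma cont_exp c : forall x, continuous (fun y => exp (- c * y)) x.
Proof. intros x. apply (ex_derive_continuous (K:=R_AbsRing) (V:=R_NormedModule)). auto_derive. auto. Qed.

Lemma der_exp c : forall x, is_derive (fun y => exp (- c * y)) x (- c * exp (- c * x)).
Proof. intros x. auto_derive. auto. ring. Qed.

Lemma is_derive_eq (f : R -> R) x l l' : is_derive f x l -> l = l' -> is_derive f x l'.
Proof. intros H ->. exact H. Qed.

Lemma stepA c (ut ux uxx : R -> R -> R) t a b : 0 < a <= b ->
  cont_on (fun x => 0 < x) ut ->
  (forall x t, 0 < x -> is_derive (fun y => ux y t) x (uxx x t)) ->
  (forall x t, 0 < x -> ut x t = uxx x t - c * ux x t) ->
  RInt (fun x => exp (- c * x) * ut x t) a b = exp (- c * b) * ux b t - exp (- c * a) * ux a t.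
Proof.
  intros Hab Hc Hd Hp. apply is_RInt_unique.
  apply (is_RInt_derive (fun y => exp (- c * y) * ux y t)); rewrite Rmin_left, Rmax_right by lra.
  - intros x Hx. eapply is_derive_eq.
    apply (is_derive_mult (fun y => exp (- c * y)) (fun y => ux y t)).
    apply der_exp. apply Hd; lra. intros; apply Rmult_comm.
    unfold plus, mult; simpl. rewrite Hp by lra. ring.
  - intros x Hx. apply (continuous_mult (K:=R_AbsRing)). apply cont_exp.
    apply c2d_1. apply (proj1 (H2d _ ut x t x Hc ltac:(lra) ltac:(intros y Hy; apply Rabs_def2 in Hy; lra))).
Qed.

Lemma RInt_minusR (f g : R -> R) a b : ex_RInt f a b -> ex_RInt g a b ->
  RInt (fun x => f x - g x) a b = RInt f a b - RInt g a b.
Proof. intros. apply (RInt_minus (V:=R_CompleteNormedModule)); auto. Qed.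

Lemma RInt_scalR (f : R -> R) a b k : ex_RInt f a b ->
  RInt (fun x => k * f x) a b = k * RInt f a b.
Proof. intros. apply (RInt_scal (V:=R_CompleteNormedModule)); auto. Qed.

Lemma RInt_extR (f g : R -> R) a b : (forall x, Rmin a b < x < Rmax a b -> f x = g x) -> RInt f a b = RInt g a b.
Proof. intros. apply (RInt_ext (V:=R_CompleteNormedModule)). auto. Qed.

Lemma RInt_exp c a b : c <> 0 ->
  RInt (fun x => exp (- c * x)) a b = (exp (- c * a) - exp (- c * b)) / c.
Proof.
  intros Hc.
  assert (H : is_RInt (fun x => exp (- c * x)) a b
     (minus ((fun y => - / c * exp (- c * y)) b) ((fun y => - / c * exp (- c * y)) a))).
  { apply (is_RInt_derive (fun y => - / c * exp (- c * y))).
    - intros x _. eapply is_derive_eq. apply is_derive_scal. apply der_exp. change (- / c * (- c * exp (- c * x)) = exp (- c * x)). field. exact Hc.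
    - intros x _. apply cont_exp. }
  rewrite (is_RInt_unique _ _ _ _ H).
  unfold minus, plus, opp; simpl. field. exact Hc.
Qed.

Lemma contR_mult (f g : R -> R) x : continuous f x -> continuous g x -> continuous (fun y => f y * g y) x.
Proof. intros. apply (continuous_mult (K:=R_AbsRing)); auto. Qed.
Lemma contR_minus (f g : R -> R) x : continuous f x -> continuous g x -> continuous (fun y => f y - g y) x.
Proof. intros. apply (continuous_minus (V:=R_NormedModule)); auto. Qed.
Lemma exRInt (f : R -> R) a b : (forall z, Rmin a b <= z <= Rmax a b -> continuous f z) -> ex_RInt f a b.
Proof. intros. apply (ex_RInt_continuous (V:=R_CompleteNormedModule)); auto. Qed.

Lemma ball_pos x y : 0 < x -> Rabs (y - x) < x -> 0 < y.
Proof. intros H1 H2. apply Rabs_def2 in H2. destruct H2. lra. Qed.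

Lemma stepBC c T (u ut ux uxx : R -> R -> R) a b :
 0 < c -> 0 < a <= b -> 0 < T ->
 cont_on (fun x => 0 <= x) u -> cont_on (fun x => 0 <= x) ux -> cont_on (fun x => 0 < x) ut ->
 (forall x t, 0 <= x -> is_derive (fun s => u x s) t (ut x t)) ->
 (forall x t, 0 < x -> is_derive (fun y => ux y t) x (uxx x t)) ->
 (forall x t, 0 < x -> ut x t = uxx x t - c * ux x t) ->
 (forall x, 0 <= x -> u x T = u x 0 - 2 * PI) ->
 exp (- c * b) * RInt (fun t => ux b t) 0 T - exp (- c * a) * RInt (fun t => ux a t) 0 T
  = 2 * PI / c * (exp (- c * b) - exp (- c * a)).
Proof.
  intros Hc Hab HT Cu Cux Cut Dt Dxx Hp Hper.
  set (G := fun s => RInt (fun x => exp (- c * x) * u x s) a b).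
  assert (HG : forall s, is_derive G s (exp (- c * b) * ux b s - exp (- c * a) * ux a s)).
  { intros s. rewrite <- (stepA c ut ux uxx s a b Hab Cut Dxx Hp).
    assert (H := is_derive_RInt_param (fun s x => exp (- c * x) * u x s) a b s).
    rewrite Rmin_left, Rmax_right in H by lra.
    eapply is_derive_eq. apply H.
    - apply filter_forall. intros s0 t Ht0. eexists. apply is_derive_scal. apply Dt. lra.
    - intros x Hx.
      apply continuity_2d_pt_ext_loc with (f := fun s y => exp (- c * y) * ut y s).
      + exists (mkposreal x ltac:(lra)). intros s' y' _ Hy'. simpl in Hy'.
        symmetry. apply is_derive_unique. apply is_derive_scal. apply Dt.
        apply Rlt_le. apply (ball_pos x); lra.
      + apply continuity_2d_pt_mult.
        * apply (continuity_1d_2d_pt_comp (fun y => exp (- c * y)) (fun _ v => v)).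
          apply continuity_pt_filterlim. apply cont_exp. apply continuity_2d_pt_id2.
        * apply (proj2 (H2d _ ut x s x Cut ltac:(lra) (fun y Hy => ball_pos x y ltac:(lra) Hy))).
    - apply filter_forall. intros s0. apply exRInt. intros z Hz.
      rewrite Rmin_left, Rmax_right in Hz by lra.
      apply contR_mult. apply cont_exp. apply c2d_1.
      apply (proj1 (H2d _ u z s0 z Cu ltac:(lra) (fun y Hy => Rlt_le _ _ (ball_pos z y ltac:(lra) Hy)))).
    - apply RInt_ext. rewrite Rmin_left, Rmax_right by lra. intros x Hx.
      apply is_derive_unique. apply is_derive_scal. apply Dt. lra. }
  assert (HI := is_RInt_derive G (fun s => exp (- c * b) * ux b s - exp (- c * a) * ux a s) 0 T
     (fun x _ => HG x)
     (fun x _ => contR_minus _ _ _ (contR_mult _ _ _ (continuous_const _ _) (Ht _ ux b x Cux ltac:(lra)))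
                               (contR_mult _ _ _ (continuous_const _ _) (Ht _ ux a x Cux ltac:(lra))))).
  assert (Ex : forall y, 0 <= y -> ex_RInt (fun t => ux y t) 0 T).
  { intros y Hy. apply exRInt. intros z _. apply (Ht _ ux y z Cux Hy). }
  rewrite <- (RInt_scalR _ _ _ _ (Ex b ltac:(lra))), <- (RInt_scalR _ _ _ _ (Ex a ltac:(lra))).
  rewrite <- RInt_minusR by (apply exRInt; intros z _; apply contR_mult; [apply continuous_const| apply (Ht _ ux _ z Cux); lra]).
  rewrite (is_RInt_unique _ _ _ _ HI).
  change (G T - G 0 = 2 * PI / c * (exp (- c * b) - exp (- c * a))). unfold G.
  rewrite (RInt_extR (fun x => exp (- c * x) * u x T) (fun x => exp (- c * x) * u x 0 - 2 * PI * exp (- c * x)))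
    by (rewrite Rmin_left, Rmax_right by lra; intros x Hx; rewrite Hper by lra; ring).
  assert (E1 : ex_RInt (fun x => exp (- c * x) * u x 0) a b).
  { apply exRInt. intros z Hz. rewrite Rmin_left, Rmax_right in Hz by lra.
    apply contR_mult. apply cont_exp. apply c2d_1.
    apply (proj1 (H2d _ u z 0 z Cu ltac:(lra) (fun y Hy => Rlt_le _ _ (ball_pos z y ltac:(lra) Hy)))). }
  assert (E2 : ex_RInt (fun x => exp (- c * x)) a b).
  { apply exRInt. intros z _. apply cont_exp. }
  rewrite RInt_minusR; auto.
  2:{ apply exRInt. intros z _. apply contR_mult. apply continuous_const. apply cont_exp. }
  rewrite RInt_scalR, RInt_exp; auto. field. lra. lra.
Qed.

Lemma mono (f df : R -> R) a b : a <= b -> (forall t, is_derive f t (df t)) -> (forall t, df t < 0) -> f b <= f a.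
Proof.
  intros Hab Hd Hn.
  destruct (MVT_gen f a b df) as [xi [_ E]].
  - intros; apply Hd.
  - intros x _. apply continuity_pt_filterlim.
    apply (ex_derive_continuous (K:=R_AbsRing) (V:=R_NormedModule)). eexists; apply Hd.
  - specialize (Hn xi). nra.
Qed.

Lemma stepD T (u ux : R -> R -> R) X : 0 < X ->
  cont_on (fun x => 0 <= x) u -> cont_on (fun x => 0 <= x) ux ->
  (forall x t, 0 < x -> is_derive (fun y => u y t) x (ux x t)) ->
  is_derive (fun y => RInt (fun t => u y t) 0 T) X (RInt (fun t => ux X t) 0 T).
Proof.
  intros HX Cu Cux Dx.
  eapply is_derive_eq. apply (is_derive_RInt_param (fun y t => u y t) 0 T X).
  - eapply filter_imp; [| apply (locally_pos X HX)]. intros y Hy t _. eexists. apply Dx. exact Hy.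
  - intros t _. apply continuity_2d_pt_ext_loc with (f := ux).
    + exists (mkposreal X HX). intros y s Hy _. simpl in Hy.
      symmetry. apply is_derive_unique. apply Dx. apply (ball_pos X); lra.
    + apply (proj1 (H2d _ ux X t X Cux HX (fun y Hy => Rlt_le _ _ (ball_pos X y HX Hy)))).
  - eapply filter_imp; [| apply (locally_pos X HX)]. intros y Hy. apply exRInt.
    intros z _. apply (Ht _ u y z Cu). lra.
  - apply RInt_extR. intros t _. apply is_derive_unique. apply Dx. exact HX.
Qed.

Lemma RInt_constR (a b k : R) : RInt (fun _ => k) a b = (b - a) * k.
Proof. apply (RInt_const (V:=R_CompleteNormedModule)). Qed.

Lemma Rabs_inv x a : Rabs x <= a -> - a <= x <= a.
Proof. unfold Rabs; destruct (Rcase_abs x); intros; split; lra. Qed.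

Lemma growth (C A B c : R) : 0 < c -> 0 <= A -> 0 <= B ->
  (forall X, 1 <= X -> Rabs C / c * exp (c * X) <= A + B * exp (c * X / 2)) -> C = 0.
Proof.
  intros Hc HA HB H.
  destruct (Req_dec C 0) as [|HC]; auto. exfalso.
  assert (HaC : 0 < Rabs C) by (apply Rabs_pos_lt; auto).
  set (N := c * (A + B) / Rabs C + 1).
  assert (HN : 1 <= N). { unfold N. assert (0 <= c * (A + B) / Rabs C). apply Rmult_le_pos. nra. left; apply Rinv_0_lt_compat; lra. lra. }
  set (X := 1 + 2 * N / c).
  assert (HX : 1 <= X). { unfold X. assert (0 <= 2 * N / c). apply Rmult_le_pos. lra. left; apply Rinv_0_lt_compat; lra. lra. }
  specialize (H X HX).
  set (y := exp (c * X / 2)) in *.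
  assert (Hy2 : exp (c * X) = y * y). { unfold y. rewrite <- exp_plus. f_equal. field. }
  rewrite Hy2 in H.
  assert (HyN : N < y). { unfold y. eapply Rlt_le_trans; [| apply exp_ineq1_le]. unfold X. 
    replace (c * (1 + 2 * N / c) / 2) with (c / 2 + N) by (field; lra). lra. }
  assert (HNc : N * (Rabs C / c) = A + B + Rabs C / c).
  { unfold N. field. split; lra. }
  assert (Hcc : 0 < Rabs C / c) by (apply Rdiv_lt_0_compat; lra).
  assert (Rabs C / c * (y * y) >= y * (N * (Rabs C / c))).
  { assert (0 <= (Rabs C / c * y) * (y - N)). apply Rmult_le_pos; nra. nra. }
  rewrite HNc in H0. nra.
Qed.

Lemma single c th T (h : R -> R) (u ut ux uxx : R -> R -> R) :
 0 < c -> 0 <= th -> (forall x, -1 <= h x <= 1) -> 0 < T ->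
 cont_on (fun x => 0 <= x) u -> cont_on (fun x => 0 <= x) ux -> cont_on (fun x => 0 < x) ut ->
 (forall x t, 0 <= x -> is_derive (fun s => u x s) t (ut x t)) ->
 (forall x t, 0 < x -> is_derive (fun y => u y t) x (ux x t)) ->
 (forall x t, 0 < x -> is_derive (fun y => ux y t) x (uxx x t)) ->
 (forall x t, 0 < x -> ut x t = uxx x t - c * ux x t) ->
 (forall t, ux 0 t = 1 + th * h (u 0 t)) ->
 (exists M, forall x, 0 <= x -> Rabs (exp (- c * x / 2) * u x 0) <= M) ->
 (forall x, 0 <= x -> u x T = u x 0 - 2 * PI) ->
 (forall x t, 0 <= x -> ut x t < 0) ->
 (1 - th) * T <= 2 * PI / c <= (1 + th) * T.
Proof.
  intros Hc Hth Hh HT Cu Cux Cut Dt Dx Dxx Hp Hbd [M HM] Hper Hneg.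
  set (I := (fun y => RInt (fun t => ux y t) 0 T) : R -> R).
  set (k := 2 * PI / c).
  set (C := exp (- c * 1) * (I 1 - k)).
  assert (HC : forall y, 0 < y -> exp (- c * y) * (I y - k) = C).
  { intros y Hy. unfold C. destruct (Rle_dec y 1).
    - assert (E := stepBC c T u ut ux uxx y 1 Hc ltac:(lra) HT Cu Cux Cut Dt Dxx Hp Hper).
      fold (I 1) (I y) k in E. lra.
    - assert (E := stepBC c T u ut ux uxx 1 y Hc ltac:(lra) HT Cu Cux Cut Dt Dxx Hp Hper).
      fold (I 1) (I y) k in E. lra. }
  assert (HI : forall X, 0 < X -> I X = C * exp (c * X) + k).
  { intros X HX. rewrite <- (HC X HX).
    replace (exp (- c * X) * (I X - k) * exp (c * X)) with ((exp (- c * X) * exp (c * X)) * (I X - k)) by ring.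
    rewrite <- exp_plus. replace (- c * X + c * X) with 0 by ring. rewrite exp_0. ring. }
  set (K := (fun y => RInt (fun t => u y t) 0 T) : R -> R).
  set (P := fun X => K X - (C / c * exp (c * X) + k * X)).
  assert (HP : forall X, 1 <= X -> P X = P 1).
  { intros X HX.
    assert (D : forall z, Rmin 1 X <= z <= Rmax 1 X -> is_derive P z 0).
    { intros z Hz. rewrite Rmin_left, Rmax_right in Hz by lra.
      eapply is_derive_eq. apply (is_derive_minus (V:=R_NormedModule)).
      apply (stepD T u ux z ltac:(lra) Cu Cux Dx).
      assert (is_derive (fun X => C / c * exp (c * X) + k * X) z (C * exp (c * z) + k)).
      { auto_derive. auto. field. lra. }
      exact H.
      fold (I z). rewrite (HI z ltac:(lra)). unfold minus, plus, opp; simpl. ring. }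
    assert (R1 := is_RInt_derive P (fun _ => 0) 1 X D (fun _ _ => continuous_const _ _)).
    assert (R2 := is_RInt_const (V:=R_NormedModule) 1 X 0).
    assert (E := is_RInt_unique _ _ _ _ R1). rewrite (is_RInt_unique _ _ _ _ R2) in E.
    unfold minus, plus, opp, scal in E; simpl in E. unfold mult in E; simpl in E. lra. }
  assert (HM0 : 0 <= M) by (eapply Rle_trans; [apply Rabs_pos | apply (HM 0); lra]).
  assert (HKb : forall X, 0 <= X -> Rabs (K X) <= T * (M * exp (c * X / 2) + 2 * PI)).
  { intros X HX.
    assert (Hu0 : Rabs (u X 0) <= M * exp (c * X / 2)).
    { specialize (HM X HX). rewrite Rabs_mult, (Rabs_pos_eq (exp _)) in HM by (left; apply exp_pos).
      assert (E : exp (c * X / 2) * exp (- c * X / 2) = 1).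
      { rewrite <- exp_plus. replace (c * X / 2 + - c * X / 2) with 0 by field. apply exp_0. }
      assert (Hp2 := exp_pos (c * X / 2)).
      replace (Rabs (u X 0)) with (exp (c * X / 2) * (exp (- c * X / 2) * Rabs (u X 0))).
      2:{ rewrite <- Rmult_assoc, E. ring. }
      rewrite (Rmult_comm M). apply Rmult_le_compat_l; lra. }
    set (B := M * exp (c * X / 2) + 2 * PI).
    assert (Hb : forall t, 0 <= t <= T -> - B <= u X t <= B).
    { intros t Ht0.
      assert (m1 := mono (fun s => u X s) (ut X) 0 t ltac:(lra) (fun s => Dt X s HX) (fun s => Hneg X s HX)).
      assert (m2 := mono (fun s => u X s) (ut X) t T ltac:(lra) (fun s => Dt X s HX) (fun s => Hneg X s HX)).
      simpl in m1, m2. rewrite Hper in m2 by lra. apply Rabs_inv in Hu0. unfold B.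
      assert (PI > 0) by apply PI_RGT_0. destruct Hu0. split; lra. }
    assert (Ex : ex_RInt (fun t => u X t) 0 T) by (apply exRInt; intros z _; apply (Ht _ u X z Cu HX)).
    apply Rabs_le. split.
    - apply Rle_trans with (RInt (fun _ => - B) 0 T). rewrite RInt_constR; lra. unfold K.
      apply RInt_le; auto. lra. apply exRInt; intros; apply continuous_const.
      intros t Ht0. apply Hb; lra.
    - apply Rle_trans with (RInt (fun _ => B) 0 T). 2:{ rewrite RInt_constR; lra. } unfold K.
      apply RInt_le; auto. lra. apply exRInt; intros; apply continuous_const.
      intros t Ht0. apply Hb; lra. }
  assert (HC0 : C = 0).
  { apply (growth C (2 * PI * T + Rabs (P 1)) (T * M + 2 * k / c) c Hc).
    - assert (PI > 0) by apply PI_RGT_0. assert (0 <= Rabs (P 1)) by apply Rabs_pos. nra.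
    - assert (0 <= k / c). { unfold k. apply Rmult_le_pos. apply Rmult_le_pos. assert (PI > 0) by apply PI_RGT_0. lra.
        left; apply Rinv_0_lt_compat; lra. left; apply Rinv_0_lt_compat; lra. } nra.
    - intros X HX. specialize (HP X HX). unfold P in HP.
      assert (Hk := HKb X ltac:(lra)).
      set (y := exp (c * X / 2)) in *.
      assert (Hy : 1 + c * X / 2 <= y) by apply exp_ineq1_le.
      assert (HkX : k * X <= 2 * k / c * y).
      { assert (0 <= k) by (unfold k; apply Rmult_le_pos; [assert (PI > 0) by apply PI_RGT_0; lra | left; apply Rinv_0_lt_compat; lra]).
        assert (X <= 2 / c * y). { apply (Rmult_le_reg_l (c / 2)). lra. replace (c / 2 * (2 / c * y)) with y by (field; lra). lra. }
        replace (2 * k / c * y) with (k * (2 / c * y)) by (field; lra). apply Rmult_le_compat_l; lra. }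
      assert (E : C / c * exp (c * X) = K X - P 1 - k * X) by (unfold P; lra).
      replace (Rabs C / c * exp (c * X)) with (Rabs (C / c * exp (c * X))).
      2:{ rewrite Rabs_mult, (Rabs_pos_eq (exp _)) by (left; apply exp_pos). unfold Rdiv. rewrite Rabs_mult, (Rabs_pos_eq (/ c)). ring. left; apply Rinv_0_lt_compat; lra. }
      rewrite E. eapply Rle_trans. apply Rabs_triang. rewrite Rabs_Ropp.
      eapply Rle_trans. apply Rplus_le_compat_r. apply Rabs_triang. rewrite Rabs_Ropp.
      assert (0 <= X) by lra. rewrite (Rabs_pos_eq (k * X)).
      2:{ apply Rmult_le_pos; [unfold k; apply Rmult_le_pos; [assert (PI > 0) by apply PI_RGT_0; lra | left; apply Rinv_0_lt_compat; lra] | lra]. }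
      nra. }
  assert (HIk : forall y, 0 < y -> I y = k) by (intros y Hy; rewrite HI, HC0 by lra; ring).
  set (g := fun x t => ux (Rmax x 0) t).
  assert (Hg : forall t, 0 <= t <= T -> continuity_2d_pt g 0 t).
  { intros t _ eps. destruct (Cux 0 t (Rle_refl 0) eps (cond_pos eps)) as [d [Hd H]].
    exists (mkposreal d Hd). intros y s Hy Hs. simpl in *. unfold g.
    rewrite (Rmax_left 0 0) by lra. apply H; auto. apply Rmax_r.
    unfold Rmax; destruct (Rle_dec y 0). rewrite Rminus_eq_0, Rabs_R0; lra. exact Hy. }
  assert (Hbnd : forall eps, 0 < eps -> (1 - th - eps) * T <= k <= (1 + th + eps) * T).
  { intros eps He.
    destruct (uniform_continuity_2d_1d' g 0 T 0 Hg (mkposreal eps He)) as [d Hd].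
    set (y := d / 2). assert (Hy : 0 < y) by (unfold y; assert (0 < d) by apply cond_pos; lra).
    assert (Hux : forall t, 0 <= t <= T -> 1 - th - eps <= ux y t <= 1 + th + eps).
    { intros t Ht0. assert (0 < d) by apply cond_pos.
      specialize (Hd t 0 t y Ht0 ltac:(lra) Ht0 ltac:(unfold y; lra) ltac:(rewrite Rminus_eq_0, Rabs_R0; lra)).
      unfold g in Hd. rewrite (Rmax_left y 0), (Rmax_left 0 0) in Hd by lra. simpl in Hd.
      apply Rabs_def2 in Hd. destruct Hd. rewrite Hbd in *. specialize (Hh (u 0 t)).
      assert (-th <= th * h (u 0 t) <= th) by (split; nra). split; lra. }
    rewrite <- (HIk y Hy). unfold I.
    assert (Ex : ex_RInt (fun t => ux y t) 0 T) by (apply exRInt; intros z _; apply (Ht _ ux y z Cux); lra).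
    split.
    - apply Rle_trans with (RInt (fun _ => 1 - th - eps) 0 T). rewrite RInt_constR; lra.
      apply RInt_le; auto. lra. apply exRInt; intros; apply continuous_const.
      intros t Ht0. apply Hux; lra.
    - apply Rle_trans with (RInt (fun _ => 1 + th + eps) 0 T). 2:{ rewrite RInt_constR; lra. }
      apply RInt_le; auto. lra. apply exRInt; intros; apply continuous_const.
      intros t Ht0. apply Hux; lra. }
  split.
  - apply Rnot_lt_le. intros H.
    assert (He : 0 < ((1 - th) * T - k) / (2 * T)) by (apply Rdiv_lt_0_compat; lra).
    destruct (Hbnd _ He) as [H1 _].
    replace ((1 - th - ((1 - th) * T - k) / (2 * T)) * T) with ((1 - th) * T - ((1 - th) * T - k) / 2) in H1 by (field; lra).
    lra.
  - apply Rnot_lt_le. intros H.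
    assert (He : 0 < (k - (1 + th) * T) / (2 * T)) by (apply Rdiv_lt_0_compat; lra).
    destruct (Hbnd _ He) as [_ H1].
    replace ((1 + th + (k - (1 + th) * T) / (2 * T)) * T) with ((1 + th) * T + (k - (1 + th) * T) / 2) in H1 by (field; lra).
    lra.
Qed.

Theorem lemma15 (h : R -> R) (c : R) (theta : nat -> R) (theta_inf : R)
    (T : nat -> R) (u : nat -> R -> R -> R) :
  admissible_h h ->
  0 < c ->
  (forall n, 0 <= theta n) ->
  (forall n, theta n <= theta (S n)) ->
  is_lim_seq theta theta_inf ->
  0 < theta_inf < 1 ->
  (forall n, 0 < T n) ->
  (forall n, classical_entire_solution c (theta n) h (u n)) ->
  (forall n t, Yc c (fun x => u n x t)) ->
  (forall n x, 0 <= x -> u n x (T n) = u n x 0 - 2 * PI) ->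
  (forall n x t, 0 <= x ->
     exists d, is_derive (fun s => u n x s) t d /\ d < 0) ->
  (forall n, u n 0 0 = 0) ->
  exists lambda mu, 0 < lambda /\ 0 < mu /\
    forall n, 2 * PI / mu <= T n /\ T n <= 2 * PI / lambda.
Proof.
  intros [_ [_ [Hh1 [_ [Hh2 _]]]]] Hc Hth0 Hmon Hlim Hti HT Hsol HY Hper Hneg _.
  assert (Hle := is_lim_seq_incr_compare theta theta_inf Hlim Hmon).
  exists (c * (1 - theta_inf)), (c * (1 + theta_inf)).
  split. nra. split. nra.
  intros n.
  destruct (Hsol n) as [ut [ux [uxx [Cu [Cux [Cut [Cuxx [Dt [Dx [Dxx [Dlim [Hp Hbd]]]]]]]]]]]].
  destruct (HY n 0) as [[M HM] _].
  assert (Hn : forall x t, 0 <= x -> ut x t < 0).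
  { intros x t Hx. destruct (Hneg n x t Hx) as [d [Hd Hd0]].
    rewrite <- (is_derive_unique _ _ _ (Dt x t Hx)), (is_derive_unique _ _ _ Hd). exact Hd0. }
  assert (S := single c (theta n) (T n) h (u n) ut ux uxx Hc (Hth0 n) (fun x => conj (Hh2 x) (Hh1 x)) (HT n)
     Cu Cux Cut Dt Dx Dxx Hp Hbd (ex_intro _ M HM) (Hper n) Hn).
  specialize (Hle n). specialize (HT n). destruct S as [S1 S2].
  assert (PI > 0) by apply PI_RGT_0.
  split.
  - apply (Rmult_le_reg_r (c * (1 + theta_inf))). nra.
    replace (2 * PI / (c * (1 + theta_inf)) * (c * (1 + theta_inf))) with (2 * PI) by (field; lra).
    assert (E : 2 * PI = 2 * PI / c * c) by (field; lra). rewrite E.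
    assert (2 * PI / c <= (1 + theta_inf) * T n) by nra.
    generalize dependent (2 * PI / c). intros. nra.
  - apply (Rmult_le_reg_r (c * (1 - theta_inf))). nra.
    replace (2 * PI / (c * (1 - theta_inf)) * (c * (1 - theta_inf))) with (2 * PI) by (field; lra).
    assert (E : 2 * PI = 2 * PI / c * c) by (field; lra). rewrite E.
    assert ((1 - theta_inf) * T n <= 2 * PI / c) by nra.
    generalize dependent (2 * PI / c). intros. nra.
Qed.
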